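(* Let $E_1,\dots,E_d\subset\{1,\dots,l\}$ and assume that for every transition $j\to k$ of the model the function $V^{jk}$ is strictly increasing. Then, for $0\le t_1<t_2$, the matrix $\mathbf V_{\mathrm{all}}(t_2)-\mathbf V_{\mathrm{all}}(t_1)$ is invertible if and only if the vectors $\Psi_{E_1},\dots,\Psi_{E_d}$ are linearly independent.
   Context: In a Markov multi-state model on states $\{0,\dots,l\}$ with transition intensities $\lambda^{jk}$, a transition of the model is a pair $(j,k)$, $j\neq k$, with $\lambda^{jk}\not\equiv0$; let $w_1,\dots,w_{n_{\mathrm{trans}}}$ enumerate them. A transition $(j,k)$ contributes to $E\subset\{1,\dots,l\}$ if $j\notin E$ and $k\in E$. For $E$ define $\Psi_E=(\psi_{E,m})_{m=1}^{n_{\mathrm{trans}}}\in\{0,1\}^{n_{\mathrm{trans}}}$ with $\psi_{E,m}=1$ iff $w_m$ contributes to $E$. Data setting: $X$ the Markov process with $X(0)=0$, $Z\in\{0,1\}$ treatment group, $C(t)=\tilde C\wedge(t-R)_+$ the censoring time at calendar time $t$ ($R$ entry time, $\tilde C$ dropout time), $X$ independent of $(R,Z,\tilde C)$; $\mu^j(s)=\mathbb E[Z\mathbb 1\{X(s-)=j\}\mathbb 1\{s\le C(t)\}]/\mathbb E[\mathbb 1\{X(s-)=j\}\mathbb 1\{s\le C(t)\}]$, assumed not to depend on $t$; $q^{jk}(s)$ deterministic weight functions. Define $V^{jk}(t)=\int_{[0,t]}q^{jk}(s)^2\lambda^{jk}(s)\mathbb E[\mathbb 1\{X(s)=j\}\mathbb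 1\{s\le C(t)\}(Z-\mu^j(s))^2]ds$ and the $d\times d$ matrix $\mathbf V_{\mathrm{all}}(t)$ with entries $V_{\mathrm{all},c_1c_2}(t)=\sum_{k\in E_{c_1}\cap E_{c_2}}\sum_{j\notin E_{c_1}\cup E_{c_2}}V^{jk}(t)$ (sum over transitions of the model). *)

(* Defs.v *)
From HB Require Import structures.
From mathcomp Require Import all_boot all_order all_algebra.
From mathcomp Require Import boolp reals.
Set Implicit Arguments. Unset Strict Implicit. Unset Printing Implicit Defensive.
Import Order.TTheory GRing.Theory Num.Theory.
Local Open Scope ring_scope.

(* States {0,...,l} are 'I_l.+1.  lam j k : R -> R is the intensity lambda^{jk}. *)

Definition transitions (R : realType) (l : nat)
  (lam : 'I_l.+1 -> 'I_l.+1 -> R -> R) : {set 'I_l.+1 * 'I_l.+1} :=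
  [set p | (p.1 != p.2) && `[< exists s : R, lam p.1 p.2 s != 0 >]].

Definition ntrans (R : realType) (l : nat) (lam : 'I_l.+1 -> 'I_l.+1 -> R -> R) : nat :=
  #|transitions lam|.

Definition w (R : realType) (l : nat) (lam : 'I_l.+1 -> 'I_l.+1 -> R -> R)
  (m : 'I_(ntrans lam)) : 'I_l.+1 * 'I_l.+1 := enum_val m.

Definition contributes (l : nat) (p : 'I_l.+1 * 'I_l.+1) (E : {set 'I_l.+1}) : bool :=
  (p.1 \notin E) && (p.2 \in E).

Definition Psi (R : realType) (l : nat) (lam : 'I_l.+1 -> 'I_l.+1 -> R -> R)
  (E : {set 'I_l.+1}) : 'rV[R]_(ntrans lam) :=
  \row_m (contributes (w m) E)%:R.

Definition Psi_mx (R : realType) (l d : nat) (lam : 'I_l.+1 -> 'I_l.+1 -> R -> R)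
  (E : 'I_d -> {set 'I_l.+1}) : 'M[R]_(d, ntrans lam) :=
  \matrix_(c, m) Psi lam (E c) 0 m.

Definition Vall (R : realType) (l d : nat) (lam : 'I_l.+1 -> 'I_l.+1 -> R -> R)
  (V : 'I_l.+1 -> 'I_l.+1 -> R -> R) (E : 'I_d -> {set 'I_l.+1}) (t : R) : 'M[R]_d :=
  \matrix_(c1, c2)
    \sum_(p in transitions lam |
           (p.2 \in E c1 :&: E c2) && (p.1 \notin E c1 :|: E c2)) V p.1 p.2 t.

(* Main.v *)
Require Import Defs.
From HB Require Import structures.
From mathcomp Require Import all_boot all_order all_algebra.
From mathcomp Require Import boolp reals.
Import Order.TTheory GRing.Theory Num.Theory.
Local Open Scope ring_scope.

Lemma row_free_of_inj (F : fieldType) m n (K : 'M[F]_(m, n)) :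
  (forall x : 'rV_m, x *m K = 0 -> x = 0) -> row_free K.
Proof.
move=> H; rewrite -kermx_eq0; apply/eqP/row_matrixP => i.
by rewrite row0; apply: H; rewrite -row_mul mulmx_ker row0.
Qed.

Lemma gram_unit (R : realFieldType) d n (A : 'M[R]_(d, n)) (D : 'rV[R]_n)
  (hD : forall m, 0 < D 0 m) :
  (A *m diag_mx D *m A^T \in unitmx) = row_free A.
Proof.
apply/idP/idP => H.
  rewrite -row_free_unit in H.
  apply: row_free_of_inj => x hx.
  apply: (row_free_inj H); by rewrite /= mul0mx !mulmxA hx !mul0mx.
rewrite -row_free_unit; apply: row_free_of_inj => x hx.
apply: (row_free_inj H); rewrite /= mul0mx.
set y := x *m A.
have h0 : (y *m diag_mx D *m y^T) 0 0 = 0.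
  by rewrite /y trmx_mul !mulmxA -(mulmxA x) -(mulmxA x) hx mul0mx mxE.
rewrite mul_mx_diag mxE in h0.
  have {}h0 : \sum_(i | predT i) y 0 i * D 0 i * y^T i 0 = 0.
    by rewrite -[X in _ = X]h0; apply: eq_bigr => i _; rewrite mxE.
have hnn : forall i, predT i -> 0 <= y 0 i * D 0 i * y^T i 0.
  by move=> i _; rewrite [y^T _ _]mxE mulrAC -expr2 mulr_ge0 ?sqr_ge0 ?(ltW (hD i)).
have hy : forall j, y 0 j = 0.
  move=> j.
  have hj2 := psumr_eq0P hnn h0 (isT : predT j).
  rewrite /= [y^T _ _]mxE mulrAC -expr2 in hj2.
  move: hj2 => /eqP; rewrite mulf_eq0 sqrf_eq0 (gt_eqF (hD j)) orbF.
  by move/eqP.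
by apply/rowP => j; rewrite hy mxE.
Qed.

Theorem lemma3 (R : realType) (l d : nat)
  (lam : 'I_l.+1 -> 'I_l.+1 -> R -> R)
  (V : 'I_l.+1 -> 'I_l.+1 -> R -> R)
  (E : 'I_d -> {set 'I_l.+1})
  (hE : forall c, ord0 \notin E c)
  (hV : forall p, p \in transitions lam ->
          forall s u : R, 0 <= s -> s < u -> V p.1 p.2 s < V p.1 p.2 u)
  (t1 t2 : R) (ht1 : 0 <= t1) (ht12 : t1 < t2) :
  (Vall lam V E t2 - Vall lam V E t1 \in unitmx) = row_free (Psi_mx lam E).
Proof.
set Dv : 'rV[R]_(ntrans lam) :=
  \row_m (V (w m).1 (w m).2 t2 - V (w m).1 (w m).2 t1).
have hD : forall m, 0 < Dv 0 m.
  move=> m; rewrite mxE subr_gt0; have hm : w m \in transitions lam by apply: (@enum_valP _ (mem (transitions lam)) m).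
  exact: (hV (w m) hm t1 t2 ht1 ht12).
rewrite -(@gram_unit _ _ _ (Psi_mx lam E) Dv hD).
suff -> : Vall lam V E t2 - Vall lam V E t1 = Psi_mx lam E *m diag_mx Dv *m (Psi_mx lam E)^T by [].
apply/matrixP => c1 c2.
rewrite !mxE -sumrB big_mkcondr /= big_enum_val /=.
apply: eq_bigr => m _.
rewrite mul_mx_diag !mxE.
rewrite /contributes !inE /w.
case: (enum_val m) => a b /=.
case: (a \in E c1); case: (a \in E c2); case: (b \in E c1); case: (b \in E c2);
  rewrite /= ?mul0r ?mulr0 ?mul1r ?mulr1 //.
Qed.
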